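(* Let $\Omega=[0,\sigma_I^{max}]$ with $\sigma_I^{max}>0$, let $g:[0,\infty)\to[0,\infty)$ be strictly increasing on $\Omega$ with $g(0)=0$, continuously differentiable on $\Omega$ with $g'(0)=0$. For constants $D_0\ge 0$, $D_1>0$ let $h(x)=g(D_0+D_1x)$. (1) Suppose $D_0+D_1x\in\Omega$ and $h(x)\in\Omega$ for all $x\in\Omega$. If there exists $\gamma<1$ such that $D_1\le\frac{\gamma}{\max_{x\in\Omega}g'(x)}$, then $h$ has exactly one fixed point $x_f$ in $\Omega$, and for every $x_0\in\Omega$ the iteration $x_{k+1}=h(x_k)$ satisfies $|x_k-x_f|\le\frac{\gamma^k}{1-\gamma}|x_0-x_f|$ for all $k\ge0$. (2) If there exists $x_1\in\Omega$ such that $\frac{1}{g'(x_1)}<D_1<\frac{x_1}{g(x_1)}$, then there exists $D_0\ge0$ such that $h(x)=g(D_0+D_1x)$ has more than one fixed point.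
   Context: Here $g$ models the channel decoder's output error probability as a function of the inverse input SINR, and $h$ is the iterative mapping of the decoder error probability across iterations; a fixed point of $h$ is an $x\ge0$ with $h(x)=x$. *)

(* Defs.v *)
From Stdlib Require Import Reals.
From Coquelicot Require Import Coquelicot.
Open Scope R_scope.

Definition Omega (smax : R) (x : R) : Prop := 0 <= x <= smax.

(* df is the derivative of f on the set A, taken within A
   (one-sided at the endpoints of a closed interval). *)
Definition has_derivative_on (f df : R -> R) (A : R -> Prop) : Prop :=
  forall x, A x ->
    filterlim (fun y => (f y - f x) / (y - x))
      (within (fun y => A y /\ y <> x) (locally x)) (locally (df x)).

Definition continuous_on_set (f : R -> R) (A : R -> Prop) : Prop :=
  forall x, A x -> filterlim f (within A (locally x)) (locally (f x)).

Definition strictly_increasing_on (f : R -> R) (A : R -> Prop) : Prop :=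
  forall x y, A x -> A y -> x < y -> f x < f y.

Definition is_max_on (f : R -> R) (A : R -> Prop) (M : R) : Prop :=
  (exists x, A x /\ f x = M) /\ (forall x, A x -> f x <= M).

Definition hmap (g : R -> R) (D0 D1 : R) (x : R) : R := g (D0 + D1 * x).

Definition is_fixed_point (h : R -> R) (x : R) : Prop := 0 <= x /\ h x = x.

(* Main.v *)
Require Import Defs.
From Stdlib Require Import Reals Lra.
From Coquelicot Require Import Coquelicot.
Open Scope R_scope.

Definition clamp (s y : R) : R := Rmax 0 (Rmin s y).

Lemma clamp_id s y : 0 <= y <= s -> clamp s y = y.
Proof. intros H; unfold clamp, Rmax, Rmin; repeat destruct Rle_dec; lra. Qed.

Lemma clamp_in s y : 0 <= s -> 0 <= clamp s y <= s.
Proof. intros H; unfold clamp, Rmax, Rmin; repeat destruct Rle_dec; lra. Qed.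

Lemma clamp_lip s y z : 0 <= s -> Rabs (clamp s y - clamp s z) <= Rabs (y - z).
Proof. intros H; unfold clamp, Rmax, Rmin; repeat destruct Rle_dec; split_Rabs; lra. Qed.

Lemma deriv_eps smax g dg (Hd : has_derivative_on g dg (Omega smax)) c
  (Hc : Omega smax c) e (He : 0 < e) :
  exists d, 0 < d /\ forall y, Omega smax y -> y <> c -> Rabs (y - c) < d ->
    Rabs ((g y - g c) / (y - c) - dg c) < e.
Proof.
  specialize (Hd c Hc (fun z => Rabs (z - dg c) < e)).
  destruct Hd as [d Hd].
  - exists (mkposreal e He). intros z Hz. exact Hz.
  - exists d; split; [apply cond_pos|]. intros y Hy Hyc Hyd.
    apply (Hd y); [exact Hyd | split; auto].
Qed.

Lemma g_cont_within smax g dg (Hd : has_derivative_on g dg (Omega smax)) c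
  (Hc : Omega smax c) e (He : 0 < e) :
  exists d, 0 < d /\ forall y, Omega smax y -> Rabs (y - c) < d ->
    Rabs (g y - g c) < e.
Proof.
  destruct (deriv_eps smax g dg Hd c Hc 1 Rlt_0_1) as [d1 [Hd1 H1]].
  set (K := Rabs (dg c) + 1).
  assert (HK : 0 < K) by (unfold K; pose proof (Rabs_pos (dg c)); lra).
  exists (Rmin d1 (e / K)). split.
  { apply Rmin_pos; [lra| apply Rdiv_lt_0_compat; lra]. }
  intros y Hy Hyd.
  destruct (Req_dec y c) as [->|Hne].
  { replace (g c - g c) with 0 by ring. rewrite Rabs_R0. lra. }
  assert (Hy1 : Rabs (y - c) < d1) by (pose proof (Rmin_l d1 (e/K)); lra).
  assert (Hy2 : Rabs (y - c) < e / K) by (pose proof (Rmin_r d1 (e/K)); lra).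
  specialize (H1 y Hy Hne Hy1).
  set (q := (g y - g c) / (y - c)) in *.
  assert (Hq : g y - g c = q * (y - c)) by (unfold q; field; lra).
  rewrite Hq, Rabs_mult.
  assert (Hqa : Rabs q <= K).
  { unfold K. replace q with (dg c + (q - dg c)) by ring.
    pose proof (Rabs_triang (dg c) (q - dg c)). lra. }
  assert (Hpos : 0 < Rabs (y - c)) by (apply Rabs_pos_lt; lra).
  apply Rle_lt_trans with (K * Rabs (y - c)).
  { apply Rmult_le_compat_r; [apply Rabs_pos| exact Hqa]. }
  replace e with (K * (e / K)) by (field; lra).
  apply Rmult_lt_compat_l; lra.
Qed.

Lemma G_cont smax g dg (Hs : 0 < smax) (Hd : has_derivative_on g dg (Omega smax)) :
  continuity (fun y => g (clamp smax y)).
Proof.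
  intros x. unfold continuity_pt, continue_in, limit1_in, limit_in.
  intros e He.
  destruct (g_cont_within smax g dg Hd (clamp smax x) (clamp_in smax x (Rlt_le _ _ Hs)) e He)
    as [d [Hd0 Hdd]].
  exists d. split; [lra|]. intros y [_ Hy]. simpl in *. unfold R_dist in *.
  apply Hdd. apply clamp_in; lra.
  pose proof (clamp_lip smax y x (Rlt_le _ _ Hs)). lra.
Qed.

Lemma G_deriv smax g dg (Hd : has_derivative_on g dg (Omega smax)) x :
  0 < x < smax -> derivable_pt_lim (fun y => g (clamp smax y)) x (dg x).
Proof.
  intros Hx e He.
  destruct (deriv_eps smax g dg Hd x (conj (Rlt_le _ _ (proj1 Hx)) (Rlt_le _ _ (proj2 Hx))) e He)
    as [d [Hd0 Hdd]].
  assert (Hp : 0 < Rmin d (Rmin x (smax - x))).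
  { repeat apply Rmin_pos; lra. }
  exists (mkposreal _ Hp). intros h Hh0 Hh. simpl in Hh.
  pose proof (Rmin_l d (Rmin x (smax - x))).
  pose proof (Rmin_r d (Rmin x (smax - x))).
  pose proof (Rmin_l x (smax - x)). pose proof (Rmin_r x (smax - x)).
  assert (Hin : 0 <= x + h <= smax) by (split_Rabs; lra).
  rewrite (clamp_id smax (x + h)) by exact Hin.
  rewrite (clamp_id smax x) by lra.
  specialize (Hdd (x + h) Hin).
  replace (x + h - x) with h in Hdd by ring.
  apply Hdd; [lra | lra].
Qed.

Lemma g_lip smax g dg M (Hs : 0 < smax) (Hd : has_derivative_on g dg (Omega smax))
  (Hinc : strictly_increasing_on g (Omega smax))
  (HM : is_max_on dg (Omega smax) M) a b :
  Omega smax a -> Omega smax b -> a <= b -> 0 <= g b - g a <= M * (b - a).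
Proof.
  intros Ha Hb Hab. destruct (Req_dec a b) as [->|Hne].
  { replace (g b - g b) with 0 by ring. replace (b - b) with 0 by ring. lra. }
  assert (Hlt : a < b) by lra.
  pose proof (Hinc a b Ha Hb Hlt).
  destruct (MVT_gen (fun y => g (clamp smax y)) a b dg) as [c [Hc Heq]].
  - intros x Hx. rewrite Rmin_left in Hx by lra. rewrite Rmax_right in Hx by lra.
    apply is_derive_Reals. apply G_deriv; auto. unfold Omega in *; lra.
  - intros x _. apply G_cont with dg; auto.
  - rewrite Rmin_left in Hc by lra. rewrite Rmax_right in Hc by lra.
    rewrite (clamp_id smax b) in Heq by exact Hb.
    rewrite (clamp_id smax a) in Heq by exact Ha.
    assert (Hdc : dg c <= M) by (apply (proj2 HM); unfold Omega in *; lra).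
    split; [lra|]. rewrite Heq. apply Rmult_le_compat_r; lra.
Qed.

Lemma lip_cont f K : 0 <= K -> (forall u v, Rabs (f u - f v) <= K * Rabs (u - v)) ->
  continuity f.
Proof.
  intros HK Hl x. unfold continuity_pt, continue_in, limit1_in, limit_in.
  intros e He. exists (e / (K + 1)). split.
  { apply Rdiv_lt_0_compat; lra. }
  intros y [_ Hy]. simpl in *. unfold R_dist in *.
  apply Rle_lt_trans with (K * Rabs (y - x)); [apply Hl|].
  apply Rle_lt_trans with ((K + 1) * Rabs (y - x)).
  { pose proof (Rabs_pos (y - x)). nra. }
  replace e with ((K + 1) * (e / (K + 1))) by (field; lra).
  apply Rmult_lt_compat_l; lra.
Qed.

Theorem propositionV1
  (smax : R) (g dg : R -> R)
  (Hsmax : 0 < smax)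
  (Hg_nonneg : forall x, 0 <= x -> 0 <= g x)
  (Hg_incr : strictly_increasing_on g (Omega smax))
  (Hg0 : g 0 = 0)
  (Hg_deriv : has_derivative_on g dg (Omega smax))
  (Hdg_cont : continuous_on_set dg (Omega smax))
  (Hdg0 : dg 0 = 0) :
  (* Part (1) *)
  (forall (D0 D1 : R), 0 <= D0 -> 0 < D1 ->
     (forall x, Omega smax x -> Omega smax (D0 + D1 * x)) ->
     (forall x, Omega smax x -> Omega smax (hmap g D0 D1 x)) ->
     forall (M gamma : R), is_max_on dg (Omega smax) M ->
     gamma < 1 -> D1 <= gamma / M ->
     exists xf,
       (Omega smax xf /\ is_fixed_point (hmap g D0 D1) xf) /\
       (forall y, Omega smax y -> is_fixed_point (hmap g D0 D1) y -> y = xf) /\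
       (forall x0, Omega smax x0 -> forall k : nat,
          Rabs (Nat.iter k (hmap g D0 D1) x0 - xf)
            <= gamma ^ k / (1 - gamma) * Rabs (x0 - xf)))
  /\
  (* Part (2) *)
  (forall (D1 : R), 0 < D1 ->
     (exists x1, Omega smax x1 /\ 0 < dg x1 /\
        1 / dg x1 < D1 /\ D1 < x1 / g x1) ->
     exists D0, 0 <= D0 /\
       exists xa xb, xa <> xb /\
         is_fixed_point (hmap g D0 D1) xa /\ is_fixed_point (hmap g D0 D1) xb).
Proof.
  split.
  - intros D0 D1 HD0 HD1 Hlin Hh M gamma HM Hg1 HDM.
    assert (HM0 : 0 <= M).
    { rewrite <- Hdg0. apply (proj2 HM). unfold Omega; lra. }
    assert (HMp : 0 < M).
    { destruct (Req_dec M 0) as [E|]; [|lra].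
      rewrite E in HDM. unfold Rdiv in HDM. rewrite Rinv_0 in HDM. lra. }
    assert (HDMg : D1 * M <= gamma).
    { apply Rmult_le_compat_r with (r := M) in HDM; [|lra].
      unfold Rdiv in HDM. rewrite Rmult_assoc, Rinv_l in HDM; lra. }
    assert (Hgp : 0 < gamma) by nra.
    set (h := hmap g D0 D1) in *.
    assert (Hcon : forall x y, Omega smax x -> Omega smax y ->
               Rabs (h x - h y) <= gamma * Rabs (x - y)).
    { assert (W : forall x y, Omega smax x -> Omega smax y -> x <= y ->
               Rabs (h x - h y) <= gamma * Rabs (x - y)).
      { intros x y Hx Hy Hxy.
        pose proof (g_lip smax g dg M Hsmax Hg_deriv Hg_incr HM (D0 + D1 * x) (D0 + D1 * y)
          (Hlin x Hx) (Hlin y Hy) ltac:(nra)) as L.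
        unfold h, hmap.
        rewrite (Rabs_left1 (x - y)) by lra.
        rewrite Rabs_left1 by lra.
        assert (M * D1 * (y - x) <= gamma * (y - x)) by nra.
        nra. }
      intros x y Hx Hy. destruct (Rle_dec x y).
      - apply W; auto.
      - rewrite Rabs_minus_sym, (Rabs_minus_sym x). apply W; auto; lra. }
    set (F := fun u => h (clamp smax u) - u).
    assert (HFc : continuity F).
    { apply lip_cont with (K := gamma + 1); [lra|]. intros u v. unfold F.
      pose proof (Hcon (clamp smax u) (clamp smax v)
        (clamp_in smax u (Rlt_le _ _ Hsmax)) (clamp_in smax v (Rlt_le _ _ Hsmax))).
      pose proof (clamp_lip smax u v (Rlt_le _ _ Hsmax)).
      pose proof (Rabs_triang (h (clamp smax u) - h (clamp smax v)) (-(u - v))).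
      replace (h (clamp smax u) - u - (h (clamp smax v) - v))
        with (h (clamp smax u) - h (clamp smax v) + - (u - v)) by ring.
      rewrite Rabs_Ropp in *. nra. }
    assert (HO0 : Omega smax 0) by (unfold Omega; lra).
    assert (HOs : Omega smax smax) by (unfold Omega; lra).
    assert (HF0 : 0 <= F 0).
    { unfold F. rewrite clamp_id by lra. pose proof (Hh 0 HO0). unfold Omega in *. lra. }
    assert (HFs : F smax <= 0).
    { unfold F. rewrite clamp_id by lra. pose proof (Hh smax HOs). unfold Omega in *. lra. }
    destruct (IVT_cor F 0 smax HFc ltac:(lra) ltac:(nra)) as [xf [Hxf HFx]].
    unfold F in HFx. rewrite clamp_id in HFx by lra.
    assert (Hfix : h xf = xf) by lra.
    exists xf. split; [split; [exact Hxf| split; [lra|exact Hfix]]|]. split.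
    + intros y Hy [_ Hyf].
      pose proof (Hcon y xf Hy Hxf). rewrite Hyf, Hfix in H.
      split_Rabs; nra.
    + intros x0 Hx0 k.
      assert (Hin : forall k, Omega smax (Nat.iter k h x0)).
      { induction k0; simpl; auto. }
      assert (Hb : Rabs (Nat.iter k h x0 - xf) <= gamma ^ k * Rabs (x0 - xf)).
      { induction k; simpl.
        - lra.
        - pose proof (Hcon (Nat.iter k h x0) xf (Hin k) Hxf). rewrite Hfix in H.
          pose proof (Rabs_pos (Nat.iter k h x0 - xf)). nra. }
      assert (Hinv : 1 <= / (1 - gamma)).
      { rewrite <- Rinv_1 at 1. apply Rinv_le_contravar; lra. }
      pose proof (pow_le gamma k (Rlt_le _ _ Hgp)).
      pose proof (Rabs_pos (x0 - xf)).
      unfold Rdiv.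
      apply Rle_trans with (gamma ^ k * Rabs (x0 - xf)); [exact Hb|].
      assert (0 <= gamma ^ k * Rabs (x0 - xf)) by nra.
      nra.
  - intros D1 HD1 [x1 [Hx1 [Hdx1 [Hlo Hhi]]]].
    assert (Hgx1 : 0 < g x1).
    { destruct (Hg_nonneg x1 (proj1 Hx1)) as [|E]; auto.
      rewrite <- E in Hhi. unfold Rdiv in Hhi. rewrite Rinv_0 in Hhi. lra. }
    assert (HDg : D1 * g x1 < x1).
    { apply Rmult_lt_compat_r with (r := g x1) in Hhi; [|lra].
      unfold Rdiv in Hhi. rewrite Rmult_assoc, Rinv_l in Hhi; lra. }
    assert (Hx1p : 0 < x1) by nra.
    assert (HD1dg : 1 < D1 * dg x1).
    { apply Rmult_lt_compat_r with (r := dg x1) in Hlo; [|lra].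
      unfold Rdiv in Hlo. rewrite Rmult_1_l, Rinv_l in Hlo; lra. }
    assert (Hinvl : / D1 < dg x1).
    { apply Rmult_lt_reg_l with D1; [lra|]. rewrite Rinv_r; lra. }
    destruct (deriv_eps smax g dg Hg_deriv x1 Hx1 (dg x1 - / D1) ltac:(lra))
      as [d [Hd Hdd]].
    set (x2 := Rmax (x1 / 2) (x1 - d / 2)).
    assert (Hx2 : x1 / 2 <= x2 /\ x1 - d / 2 <= x2 /\ x2 < x1).
    { unfold x2, Rmax; destruct Rle_dec; lra. }
    assert (HO2 : Omega smax x2) by (unfold Omega in *; lra).
    specialize (Hdd x2 HO2 ltac:(lra) ltac:(split_Rabs; lra)).
    set (q := (g x2 - g x1) / (x2 - x1)) in *.
    assert (Hq : g x2 - g x1 = q * (x2 - x1)) by (unfold q; field; lra).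
    assert (Hqg : / D1 < q) by (split_Rabs; lra).
    assert (HDq : 1 < D1 * q).
    { apply Rmult_lt_compat_l with (r := D1) in Hqg; [|lra]. rewrite Rinv_r in Hqg; lra. }
    assert (Hphi : x1 - D1 * g x1 < x2 - D1 * g x2) by nra.
    set (D0 := ((x1 - D1 * g x1) + (x2 - D1 * g x2)) / 2).
    exists D0. split; [unfold D0; lra|].
    set (phi := fun u => clamp smax u - D1 * g (clamp smax u) - D0).
    assert (Hphic : continuity phi).
    { unfold phi. apply continuity_minus; [|apply continuity_const; intros ? ?; auto].
      apply continuity_minus.
      - apply lip_cont with 1; [lra|]. intros u v.
        pose proof (clamp_lip smax u v (Rlt_le _ _ Hsmax)). lra.
      - apply continuity_scal. apply G_cont with dg; auto. }
    assert (Hp0 : phi 0 < 0).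
    { unfold phi. rewrite clamp_id by lra. rewrite Hg0. unfold D0. lra. }
    assert (Hp2 : 0 < phi x2).
    { unfold phi. rewrite clamp_id by (unfold Omega in *; lra). unfold D0. lra. }
    assert (Hp1 : phi x1 < 0).
    { unfold phi. rewrite clamp_id by (unfold Omega in *; lra). unfold D0. lra. }
    destruct (IVT_cor phi 0 x2 Hphic ltac:(lra) ltac:(nra)) as [ua [Hua Hpa]].
    destruct (IVT_cor phi x2 x1 Hphic ltac:(lra) ltac:(nra)) as [ub [Hub Hpb]].
    assert (Hua2 : ua < x2).
    { destruct (Req_dec ua x2) as [E|]; [rewrite E in Hpa; lra|lra]. }
    assert (Hub2 : x2 < ub).
    { destruct (Req_dec ub x2) as [E|]; [rewrite E in Hpb; lra|lra]. }
    assert (HOa : Omega smax ua) by (unfold Omega in *; lra).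
    assert (HOb : Omega smax ub) by (unfold Omega in *; lra).
    unfold phi in Hpa, Hpb.
    rewrite clamp_id in Hpa by exact HOa. rewrite clamp_id in Hpb by exact HOb.
    exists (g ua), (g ub). split.
    { pose proof (Hg_incr ua ub HOa HOb ltac:(lra)). lra. }
    split; split.
    + apply Hg_nonneg; unfold Omega in *; lra.
    + unfold hmap. f_equal. lra.
    + apply Hg_nonneg; unfold Omega in *; lra.
    + unfold hmap. f_equal. lra.
Qed.
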